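(* Let $G$ be a finite directed graph and $R\subseteq V(G)$, and consider the maximal faces of $\mathrm{DT}_R(G)$ (all of which are directed forests with root set $R$). Call a vertex $v$ ''left'' if, in every maximal face of $\mathrm{DT}_R(G)$, the tree containing $v$ has the same root $r$ and the directed path from $r$ to $v$ is the same; call all other vertices ''right''. Then every edge $(x\rightarrow y)$ lying in some maximal face of $\mathrm{DT}_R(G)$ whose endpoints are on different sides (one left, one right) is nice in $\mathrm{DT}_R(G)$.
   Context: A directed forest in $G$ is a set of edges of $G$ which, viewed as a graph on $V(G)$, is acyclic and has at most one edge directed to each vertex; equivalently a disjoint union of directed trees with all edges oriented away from the root. Its roots are the vertices with no forest edge directed to them. $\mathrm{DT}(G)$ is the simplicial complex with vertex set $E(G)$ whose simplices are the directed forests; $\mathrm{DT}_R(G)$ is the subcomplex generated by the directed forests with root set exactly $R$. An edge $(x\rightarrow y)$ of $G$ is nice in a subcomplex $\Delta$ of $\mathrm{DT}(G)$ if (i) there is an edge $(z\rightarrow y)$ in $\Delta$ with $z\ne x$, and (ii) every forest $F\in\Delta$ without an edge directed to $y$ satisfies $F\cup\{(x\rightarrow y)\}\in\Delta$. *)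

(* Defs.v *)
From mathcomp Require Import all_boot.
Set Implicit Arguments. Unset Strict Implicit. Unset Printing Implicit Defensive.

(* A finite directed graph G: vertex type V (a finType) and edge set
   E : {set V * V}; an edge (x, y) is the directed edge x -> y.
   Sets of edges F : {set V * V}. *)

Section DT.
Variable V : finType.

Definition erel (F : {set V * V}) : rel V := fun x y => (x, y) \in F.

Definition indeg_le1 (F : {set V * V}) : Prop :=
  forall x x' y, (x, y) \in F -> (x', y) \in F -> x = x'.

(* F is acyclic (no directed cycle; given in-degree <= 1 this is the same
   as the underlying undirected graph being acyclic) *)
Definition acyclic (F : {set V * V}) : Prop :=
  forall x y, (x, y) \in F -> ~~ connect (erel F) y x.

Definition directed_forest (E F : {set V * V}) : Prop :=
  F \subset E /\ indeg_le1 F /\ acyclic F.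

Definition roots (F : {set V * V}) : {set V} :=
  [set v | [forall u, (u, v) \notin F]].

Definition DT_R (E : {set V * V}) (R : {set V}) (F : {set V * V}) : Prop :=
  exists F' : {set V * V}, F \subset F' /\ directed_forest E F' /\ roots F' = R.

Definition maximal_face (Delta : {set V * V} -> Prop) (F : {set V * V}) : Prop :=
  Delta F /\ forall F' : {set V * V}, Delta F' -> F \subset F' -> F' = F.

(* left vertex: a common root r and a common directed path from r to v
   (given by its sequence of vertices after r) in every maximal face *)
Definition left_vertex (E : {set V * V}) (R : {set V}) (v : V) : Prop :=
  exists (r : V) (p : seq V), forall F, maximal_face (DT_R E R) F ->
    r \in roots F /\ path (erel F) r p /\ last r p = v.

Definition nice (E : {set V * V}) (Delta : {set V * V} -> Prop) (x y : V) : Prop :=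
  (exists z, z != x /\ Delta [set (z, y)]) /\
  (forall F : {set V * V}, Delta F -> [forall u, (u, y) \notin F] ->
     Delta (F :|: [set (x, y)])).

End DT.

(* Main.v *)
Require Import Defs.
From mathcomp Require Import all_boot.
From Stdlib Require Import Classical.

Set Implicit Arguments. Unset Strict Implicit. Unset Printing Implicit Defensive.

Section Helpers.
Variable V : finType.

Lemma max_face_forest (E : {set V * V}) (R : {set V}) (F : {set V * V}) : maximal_face (DT_R E R) F ->
  directed_forest E F /\ Defs.roots F = R.
Proof.
move=> [[F' [sFF' [fF' rF']]] mx].
have eq : F' = F by apply: mx => //; exists F'; split.
by subst F'.
Qed.

Lemma forest_max (E : {set V * V}) (R : {set V}) (F : {set V * V}) : directed_forest E F -> Defs.roots F = R ->
  maximal_face (DT_R E R) F.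
Proof.
move=> [fE [fi fa]] rt; split; first by exists F; split.
move=> G [G' [sGG' [[gE [gi ga]] rtG]]] sFG.
have sG'F : G' \subset F.
  apply/subsetP => [[a b]] abG.
  have : b \notin Defs.roots F.
    rewrite rt -rtG inE; apply/negP => /forallP /(_ a); by rewrite abG.
  rewrite inE negb_forall => /existsP [c]; rewrite negbK => cb.
  have cbG : (c, b) \in G' by apply: (subsetP sGG'); apply: (subsetP sFG).
  by rewrite (gi _ _ _ abG cbG).
apply/eqP; rewrite eqEsubset sFG andbT.
exact: subset_trans sGG' sG'F.
Qed.

Lemma connect_mono (A B : {set V * V}) (u v : V) : A \subset B ->
  connect (erel A) u v -> connect (erel B) u v.
Proof.
move=> sAB /connectP [q Hq ->]; apply/connectP; exists q => //.
apply: sub_path Hq => a b; rewrite /erel; exact: (subsetP sAB).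
Qed.

Lemma conn_split (A : {set V * V}) (x y u v : V) :
  connect (erel (A :|: [set (x, y)])) u v ->
  connect (erel A) u v \/
  (connect (erel A) u x /\ connect (erel (A :|: [set (x, y)])) y v).
Proof.
move=> /connectP [q Hq ->]; elim: q u Hq => [|w q IH] u /=.
  by move=> _; left; exact: connect0.
move=> /andP [euw Hp].
have euw' := euw; rewrite /erel in_setU in_set1 in euw'.
case/orP: euw' => [euw' | /eqP [eu ew]].
  case: (IH _ Hp) => [Hc | [H1 H2]].
    by left; apply: connect_trans (connect1 (e:=erel A) euw') Hc.
  by right; split=> //; apply: connect_trans (connect1 (e:=erel A) euw') H1.
subst u w; right; split; first exact: connect0.
by apply/connectP; exists q.
Qed.

Lemma pred_in_path (H : {set V * V}) (r : V) (p : seq V) (u w : V) : indeg_le1 H -> w \in p ->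
  path (erel H) r p -> (u, w) \in H -> u \in r :: p.
Proof.
move=> Hi; elim: p r => [|a p IH] r //= wp /andP [era pa] uw.
rewrite inE in wp; case/orP: wp => [/eqP ew | wp].
  subst w; by rewrite (Hi _ _ _ uw era) mem_head.
by rewrite inE (IH a wp pa uw) orbT.
Qed.

Lemma anc_closed (H : {set V * V}) (r : V) (p : seq V) (u v : V) : indeg_le1 H -> r \in Defs.roots H ->
  path (erel H) r p -> v \in r :: p -> connect (erel H) u v -> u \in r :: p.
Proof.
move=> Hi Hr Hp Hv /connectP [q Hq Hl]; subst v.
elim: q u Hq Hv => [|w q IH] u //= /andP [euw pq] Hv.
have wp := IH _ pq Hv.
rewrite inE in wp; case/orP: wp => [/eqP ew | wp].
  subst w; move: Hr; rewrite inE => /forallP /(_ u) /negP; by [].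
exact: pred_in_path Hi wp Hp euw.
Qed.

Lemma conn_last (e : rel V) (r : V) (p : seq V) (y : V) : y \in r :: p -> path e r p -> connect e y (last r p).
Proof.
elim: p r => [|a p IH] r /=.
  by rewrite inE => /eqP -> _; exact: connect0.
rewrite inE => /orP [/eqP -> | yp] /andP [era pa].
  by apply/connectP; exists (a :: p) => //=; rewrite era.
exact: IH.
Qed.

End Helpers.

Theorem proposition2p5 (V : finType) (E : {set V * V}) (R : {set V}) (x y : V) :
  (exists F, maximal_face (DT_R E R) F /\ (x, y) \in F) ->
  (left_vertex E R x /\ ~ left_vertex E R y) \/
  (~ left_vertex E R x /\ left_vertex E R y) ->
  nice E (DT_R E R) x y.
Proof.
move=> [F0 [mF0 xyF0]] side.
have [[fE0 [fi0 fa0]] rt0] := max_face_forest mF0.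
have yR : y \notin R.
  rewrite -rt0 inE; apply/negP => /forallP /(_ x) /negP; by [].
have xyE : (x, y) \in E := subsetP fE0 _ xyF0.
have [xl yr] : left_vertex E R x /\ ~ left_vertex E R y.
  case: side => [[xl0 yr0]|[xr yl]]; first by split; [exact: xl0|exact: yr0].
  exfalso; apply: xr.
  case: yl => r [p Hp]; have [rR [pa la]] := Hp F0 mF0.
  move: Hp pa la; case/lastP: p => [|p' a] Hp pa la.
    simpl in la; subst r; rewrite rt0 in rR; by rewrite rR in yR.
  rewrite last_rcons in la; subst a.
  rewrite rcons_path in pa; case/andP: pa => pa e.
  have ex := fi0 _ _ _ e xyF0.
  exists r, p' => F mF; have [rF [paF laF]] := Hp F mF.
  rewrite rcons_path in paF; case/andP: paF => paF _.
  by split.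
split.
  apply: NNPP => Hno; apply: yr.
  case: xl => r [p Hx]; exists r, (rcons p y) => F mF.
  have [rF [pF lF]] := Hx F mF.
  have [[fE [fi fa]] rtF] := max_face_forest mF.
  move: yR; rewrite -rtF inE negb_forall => /existsP [z]; rewrite negbK => zy.
  case: (eqVneq z x) => [ezx | nzx].
    subst z; split => //; split; last by rewrite last_rcons.
    by rewrite rcons_path pF /= lF.
  exfalso; apply: Hno; exists z; split => //.
  exists F; split; first by rewrite sub1set.
  by split.
move=> F [F' [sFF' [[fE' [fi' fa']] rt']]] noy.
set Fm := [set e in F' | e.2 != y].
set F'' := Fm :|: [set (x, y)].
have rt'' : Defs.roots F'' = R.
  apply/setP => v; rewrite -rt' !inE.
  case: (eqVneq v y) => [-> | nvy].
    transitivity false.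
      apply/negbTE/negP => /forallP /(_ x); by rewrite !inE eqxx orbT.
    symmetry; apply/negbTE; move: yR; by rewrite -rt' inE.
  apply: eq_forallb => u; by rewrite !inE /= nvy andbT xpair_eqE (negbTE nvy) andbF orbF.
have fi'' : indeg_le1 F''.
  move=> a a' b; rewrite !inE /= !xpair_eqE.
  case/orP => [/andP [H1 nb] | /andP [/eqP H1 /eqP H1']];
  case/orP => [/andP [H2 nb'] | /andP [/eqP H2 /eqP H2']].
  - exact: fi' H1 H2.
  - by subst b; rewrite eqxx in nb.
  - by subst b; rewrite eqxx in nb'.
  - by subst.
have mF' : maximal_face (DT_R E R) F' by apply: forest_max.
case: xl => r [p Hx].
have [rF' [pF' lF']] := Hx F' mF'.
have [rF0 [pF0 lF0]] := Hx F0 mF0.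
have ynot : y \notin r :: p.
  apply/negP => yin; apply: (negP (fa0 _ _ xyF0)).
  by rewrite -lF0; apply: conn_last.
have pF'' : path (erel F'') r p.
  apply: (sub_in_path (P := fun v => v != y)) (pF').
    move=> a b _ nb ab; rewrite /erel !inE /=.
    by rewrite (ab : (a, b) \in F') (nb : b != y).
  apply/allP => v vin; apply/eqP => ev; subst v; by rewrite vin in ynot.
have rF'' : r \in Defs.roots F''.
  by rewrite rt'' -rt'.
have key : forall u, connect (erel F'') u x -> u \in r :: p.
  move=> u Hc; apply: (anc_closed fi'' rF'' pF'' _ Hc).
  by rewrite -lF'; apply: mem_last.
exists F''; split.
  apply: setSU; apply/subsetP => [[a b]] eF; rewrite inE (subsetP sFF' _ eF) /=.
  apply/eqP => eb; subst b; move/forallP: noy => /(_ a) /negP; by [].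
split; last by [].
split.
  apply/subsetP => e; rewrite !inE => /orP [/andP [eF' _] | /eqP ->].
    exact: (subsetP fE' _ eF').
  by [].
split; first by [].
move=> a b abF''; apply/negP => Hc.
move: abF''; rewrite /erel in_setU in_set1 => /orP [abm | /eqP [ea eb]]; last first.
  subst a b; have := key _ Hc; by rewrite (negbTE ynot).
case: (conn_split Hc) => [Hc1 | [Hc1 Hc2]].
  have abF' : (a, b) \in F' by move: abm; rewrite inE => /andP [].
  apply: (negP (fa' _ _ abF')).
  apply: connect_mono Hc1; apply/subsetP => e; rewrite inE => /andP [] //.
have : connect (erel F'') y x.
  apply: connect_trans Hc2 _.
  have ab'' : erel F'' a b by rewrite /erel in_setU abm.
  apply: connect_trans (connect1 ab'') _.
  by apply: connect_mono Hc1; apply: subsetUl.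
move/key; by rewrite (negbTE ynot).
Qed.
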